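(* For all integers $m\ge1$, $r\ge0$ and $n\ge0$, $$\mathcal D_{m,r}(n,x)=\sum_{k=0}^n\left(\frac12\sum_{l=0}^{n-k}\binom nl W_{m,r}(n-l,k)\,T^{[m]}_l(1)+\frac12W_{m,r}(n,k)\right)\mathcal E_k(x).$$
   Context: The Euler polynomials are defined by $\sum_{n\ge0}\mathcal E_n(x)\frac{t^n}{n!}=\frac{2e^{xt}}{e^t+1}$. For integers $m\ge1$, $n,k,r\ge0$, $W_{m,r}(n,k)$ denotes the $r$-Whitney number of the second kind, defined by $\sum_{n\ge k}W_{m,r}(n,k)\frac{z^n}{n!}=\frac{e^{rz}}{k!}\left(\frac{e^{mz}-1}{m}\right)^k$; the $r$-Dowling polynomial is $\mathcal D_{m,r}(n,u):=\sum_{k=0}^nW_{m,r}(n,k)u^k$; and the $[m]$-Touchard polynomials are $T^{[m]}_n(x):=\sum_{k=0}^n W_{m,0}(n,k)x^k$ (so $T^{[m]}_0=1$). *)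

(* Defs.v *)
From HB Require Import structures.
From mathcomp Require Import all_boot all_order all_algebra.
Set Implicit Arguments. Unset Strict Implicit. Unset Printing Implicit Defensive.
Import Order.TTheory GRing.Theory Num.Theory.
Local Open Scope ring_scope.

(* r-Whitney numbers of the second kind W_{m,r}(n,k): n! times the coefficient
   of z^n in e^{rz}/k! ((e^{mz}-1)/m)^k, i.e. after expanding (e^{mz}-1)^k
   binomially:  1/(m^k k!) * sum_{j=0}^k (-1)^(k-j) C(k,j) (m j + r)^n. *)
Definition whitney (m r n k : nat) : rat :=
  ((m%:R ^+ k * (k`!)%:R)^-1) *
  \sum_(j < k.+1) ((-1) ^+ (k - j) * ('C(k, j))%:R * ((m * j + r)%N%:R) ^+ n).

Definition dowling (m r n : nat) : {poly rat} :=
  \sum_(k < n.+1) (whitney m r n k)%:P * 'X^k.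

Definition touchard (m n : nat) : {poly rat} :=
  \sum_(k < n.+1) (whitney m 0 n k)%:P * 'X^k.

(* Euler polynomials, from 2 e^{xt}/(e^t+1): comparing coefficients of t^n/n!
   in (e^t + 1) * sum_n E_n(x) t^n/n! = 2 e^{xt} gives
   sum_{k=0}^n C(n,k) E_k(x) + E_n(x) = 2 x^n, i.e.
   E_n(x) = x^n - 1/2 * sum_{k<n} C(n,k) E_k(x). *)
Fixpoint euler_list (n : nat) : seq {poly rat} :=
  match n with
  | 0%N => [:: 1]
  | n'.+1 =>
      let s := euler_list n' in
      rcons s ('X^n - (2%:R^-1 : rat) *:
                  \sum_(k < n) ('C(n, k))%:R *: s`_k)
  end.

Definition euler_poly (n : nat) : {poly rat} := (euler_list n)`_n.

(* Main.v *)
Require Import Defs.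
From HB Require Import structures.
From mathcomp Require Import all_boot all_order all_algebra.
From mathcomp Require Import ring lra zify.
Import Order.TTheory GRing.Theory Num.Theory.
Local Open Scope ring_scope.

Definition Df (f : nat -> rat) : nat -> rat := fun i => f i.+1 - f i.
Definition Dk k f i := iter k Df f i.

Lemma DkS k f i : Dk k.+1 f i = Dk k f i.+1 - Dk k f i.
Proof. by rewrite /Dk iterS. Qed.

Lemma Dk_ext f g : (forall i, f i = g i) -> forall k i, Dk k f i = Dk k g i.
Proof. by move=> H; elim=> [|k IH] i; rewrite ?DkS ?IH //=. Qed.

Lemma Dk_lin N (c : 'I_N -> rat) (F : 'I_N -> nat -> rat) f :
  (forall i, f i = \sum_(p < N) c p * F p i) ->
  forall k i, Dk k f i = \sum_(p < N) c p * Dk k (F p) i.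
Proof.
move=> H; elim=> [|k IH] i; first exact: H.
rewrite DkS !IH -sumrB; apply: eq_bigr => p _; rewrite DkS mulrBr //.
Qed.

Lemma Dk_shift h b k i : Dk k (fun i => h (b + i)%N) i = Dk k h (b + i)%N.
Proof. by elim: k i => [|k IH] i; rewrite ?DkS ?IH ?addnS. Qed.

Lemma sgnS k b : (b < k)%N -> (-1) ^+ (k - b) = - (-1) ^+ (k - b.+1) :> rat.
Proof. by move=> hb; rewrite -(subnSK hb) exprS mulN1r. Qed.

Lemma Dk_closed k f i :
  Dk k f i = \sum_(b < k.+1) (-1) ^+ (k - b) * ('C(k, b))%:R * f (i + b)%N.
Proof.
elim: k i => [|k IH] i.
  by rewrite big_ord1 /= addn0 mul1r.
rewrite DkS !IH [in RHS]big_ord_recl /=.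
under [in RHS]eq_bigr => b _ do rewrite /bump /= add1n binS natrD subSS mulrDr mulrDl.
rewrite big_split /= [RHS]addrC [RHS]addrAC [RHS]addrC; congr (_ + _).
  by apply: eq_bigr=> b _; rewrite addnS.
rewrite addrC [in RHS]big_ord_recr /= (@bin_small k k.+1) // mulr0 mul0r addr0.
rewrite [in LHS]big_ord_recl /= subn0 bin0 addn0 opprD subSn // exprS mulN1r !mulNr.
rewrite subn0 bin0; congr (_ + _); rewrite -sumrN; apply: eq_bigr => b _.
by rewrite /bump /= add1n (@sgnS k b (ltn_ord b)) !mulNr.
Qed.

Definition g (m r n : nat) : nat -> rat := fun c => ((m * c + r)%N%:R) ^+ n.

Lemma Dg m r n i :
  Df (g m r n) i = \sum_(p < n) (('C(n, p.+1))%:R * (m%:R) ^+ p.+1) * g m r (n - p.+1) i.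
Proof.
rewrite /Df /g.
have -> : (m * i.+1 + r = (m * i + r) + m)%N by rewrite mulnS; lia.
rewrite natrD exprDn big_ord_recl /= subn0 expr0 mulr1 bin0 mulr1n addrC addKr.
by apply: eq_bigr => p _; rewrite /bump /= add1n -mulr_natr; ring.
Qed.

Lemma vanish m r n k : (n < k)%N -> Dk k (g m r n) 0 = 0.
Proof.
elim/ltn_ind: n k => n IH [|k] // hk.
rewrite /Dk iterSr -/(Dk k _ 0) (Dk_lin _ _ _ _ (Dg m r n)).
apply: big1 => p _; rewrite IH ?mulr0 //.
  by have := ltn_ord p; lia.
by have := ltn_ord p; lia.
Qed.

Lemma whitneyE m r n k :
  whitney m r n k = ((m%:R ^+ k * (k`!)%:R)^-1) * Dk k (g m r n) 0.
Proof.
rewrite Dk_closed /whitney; congr (_ * _).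
Qed.

Lemma whitney_vanish m r n k : (n < k)%N -> whitney m r n k = 0.
Proof. by move=> h; rewrite whitneyE vanish // mulr0. Qed.

Lemma conv m r n a j :
  \sum_(l < n.+1) ('C(n, l))%:R * Dk a (g m 0 l) 0 * Dk j (g m r (n - l)) 0
  = Dk (a + j) (g m r n) 0.
Proof.
have H1 : forall b, \sum_(l < n.+1) (('C(n, l))%:R * Dk j (g m r (n - l)) 0) * g m 0 l b
   = Dk j (g m r n) b.
  move=> b.
  transitivity (Dk j (fun i => g m r n (b + i)%N) 0); last by rewrite Dk_shift addn0.
  symmetry.
  rewrite (Dk_lin _ (fun l : 'I_n.+1 => ('C(n, l))%:R * g m 0 l b)
             (fun l : 'I_n.+1 => g m r (n - l))).
    by apply: eq_bigr => l _; rewrite mulrAC.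
  move=> i; rewrite /g.
  have -> : (m * (b + i) + r = (m * i + r) + m * b)%N by lia.
  rewrite natrD exprDn; apply: eq_bigr => l _.
  by rewrite addn0 -mulr_natr; ring.
transitivity (Dk a (fun b => Dk j (g m r n) b) 0); last by rewrite /Dk iterD.
symmetry.
rewrite (Dk_lin _ (fun l : 'I_n.+1 => ('C(n, l))%:R * Dk j (g m r (n - l)) 0)
             (fun l : 'I_n.+1 => g m 0 l) (fun b => Dk j (g m r n) b)).
  by apply: eq_bigr => l _; rewrite mulrAC.
by move=> b; rewrite H1.
Qed.

Lemma sum_extend (V : zmodType) (F : nat -> V) p q : (p <= q)%N ->
  (forall i, (p < i)%N -> (i <= q)%N -> F i = 0) ->
  \sum_(i < p.+1) F i = \sum_(i < q.+1) F i.
Proof.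
move=> hpq H; rewrite (big_ord_widen q.+1 F) //; rewrite big_mkcond /=.
apply: eq_bigr => i _; case: ifP => // h; rewrite H //; have := ltn_ord i; lia.
Qed.

Definition cc (m k : nat) : rat := (m%:R ^+ k * (k`!)%:R)^-1.

Lemma coefc m a j : (1 <= m)%N -> ('C(a + j, j))%:R * cc m (a + j) = cc m j * cc m a.
Proof.
move=> hm.
have F := bin_fact (leq_addl a j); rewrite addnK in F.
rewrite /cc -F !natrM exprD.
have h1 : (m%:R : rat) != 0 by rewrite pnatr_eq0 -lt0n.
have h2 : ((j`!)%:R : rat) != 0 by rewrite pnatr_eq0 -lt0n fact_gt0.
have h3 : ((a`!)%:R : rat) != 0 by rewrite pnatr_eq0 -lt0n fact_gt0.
have h4 : (('C(a + j, j))%:R : rat) != 0 by rewrite pnatr_eq0 -lt0n bin_gt0 leq_addl.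
by field; rewrite h2 h3 h4 !expf_neq0.
Qed.

Lemma touchard1 m l : (touchard m l).[1] = \sum_(a < l.+1) whitney m 0 l a.
Proof.
rewrite /touchard horner_sum; apply: eq_bigr => a _.
by rewrite hornerCM hornerXn expr1n mulr1.
Qed.

Lemma star m r n j : (1 <= m)%N -> (j <= n)%N ->
  \sum_(k < n.+1) ('C(k, j))%:R * whitney m r n k =
  \sum_(l < (n - j).+1) ('C(n, l))%:R * whitney m r (n - l) j * (touchard m l).[1].
Proof.
move=> hm hj.
have L : \sum_(k < n.+1) ('C(k, j))%:R * whitney m r n k =
   cc m j * \sum_(a < n.+1) cc m a * Dk (a + j) (g m r n) 0.
  rewrite -(@sum_extend _ (fun a => cc m a * Dk (a + j) (g m r n) 0) (n - j)); last 2 first.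
  - exact: leq_subr.
  - by move=> i h1 h2; rewrite vanish ?mulr0 //; lia.
  rewrite -(big_mkord xpredT (fun k => ('C(k, j))%:R * whitney m r n k)).
  rewrite (@big_cat_nat _ _ _ j 0 n.+1) /=; last 2 first; [by []|by lia|].
  rewrite big1_seq /= ?add0r; last first.
    by move=> k; rewrite mem_index_iota => /andP[_ hk]; rewrite bin_small // mul0r.
  rewrite -{1}(add0n j) big_addn -subSn // big_mkord mulr_sumr.
  apply: eq_bigr => a _; rewrite whitneyE -/(cc m (a + j)) [LHS]mulrA; rewrite [RHS]mulrA -(coefc m a j hm) //.
rewrite L.
rewrite (@sum_extend _ (fun l => ('C(n, l))%:R * whitney m r (n - l) j * (touchard m l).[1]) (n - j) n); last 2 first.
- exact: leq_subr.
- by move=> i h1 h2; rewrite whitney_vanish ?mulr0 ?mul0r //; lia.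
under [RHS]eq_bigr => l _.
  rewrite touchard1 (@sum_extend _ (fun a => whitney m 0 l a) l n); last 2 first.
  - by rewrite -ltnS.
  - by move=> i h1 h2; rewrite whitney_vanish.
  rewrite mulr_sumr.
  over.
rewrite exchange_big mulr_sumr; apply: eq_bigr => a _.
rewrite -conv mulr_sumr mulr_sumr; apply: eq_bigr => l _.
rewrite /= !whitneyE /cc; ring.
Qed.

Lemma size_euler n : size (euler_list n) = n.+1.
Proof. by elim: n => [|n IH] //=; rewrite size_rcons IH. Qed.

Lemma euler_nth n k : (k <= n)%N -> (euler_list n)`_k = euler_poly k.
Proof.
elim: n => [|n IH] hk; first by case: k hk.
rewrite leq_eqVlt in hk; case/orP: hk => [/eqP -> //|hk].
by rewrite /= nth_rcons size_euler hk IH.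
Qed.

Lemma euler_rec k : euler_poly k =
  'X^k - (2%:R^-1 : rat) *: \sum_(j < k) ('C(k, j))%:R *: euler_poly j.
Proof.
case: k => [|k]; first by rewrite big_ord0 scaler0 subr0 expr0.
rewrite /euler_poly /= nth_rcons size_euler ltnn eqxx; congr (_ - _ *: _).
by apply: eq_bigr => j _; rewrite euler_nth // -ltnS.
Qed.

Lemma half : (2%:R^-1 : rat) + 2%:R^-1 = 1.
Proof. by []. Qed.

Lemma Xk k : 'X^k = (2%:R^-1 : rat) *:
   (\sum_(j < k.+1) ('C(k, j))%:R *: euler_poly j + euler_poly k).
Proof.
rewrite big_ord_recr /= binn scale1r -addrA scalerDr scalerDr -scalerDl half scale1r.
by rewrite {1}(euler_rec k) addrC subrK.
Qed.

Theorem mainTheorem17 (m r n : nat) (hm : (1 <= m)%N) :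
  dowling m r n =
  \sum_(k < n.+1)
     ((2%:R^-1 : rat) *
        \sum_(l < (n - k).+1)
           ('C(n, l))%:R * whitney m r (n - l) k * (touchard m l).[1]
      + (2%:R^-1 : rat) * whitney m r n k) *: euler_poly k.
Proof.
under [RHS]eq_bigr => k _ do rewrite -(star m r n k hm (ltn_ord k)) -mulrDr -scalerA.
rewrite -scaler_sumr.
under [X in _ = _ *: X]eq_bigr => k _ do rewrite scalerDl scaler_suml.
rewrite big_split /= exchange_big /= /dowling.
under [LHS]eq_bigr => k _ do rewrite mul_polyC Xk scalerA mulrC -scalerA scalerDr scaler_sumr.
rewrite -scaler_sumr big_split /=; congr (_ *: (_ + _)).
apply: eq_bigr => i _.
rewrite (@sum_extend _ (fun j => whitney m r n i *: ('C(i, j)%:R *: euler_poly j)) i n).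
- by apply: eq_bigr => j _; rewrite scalerA mulrC.
- by rewrite -ltnS.
- by move=> j h1 h2; rewrite bin_small // scale0r scaler0.
Qed.
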